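(* Let $X$, $Y$ be racks. (i) If there are $y_1\neq y_2\in Y$ and $x_1\neq x_2\in X$ with $y_1\triangleright y_2=y_2$ and $x_1\triangleright(x_2\triangleright(x_1\triangleright x_2))\neq x_2$, then the product rack $X\times Y$ is of type D. (ii) If there are pairwise distinct $y_1,\dots,y_4\in Y$ and $x_1,\dots,x_4\in X$ with $y_i\triangleright y_j=y_j$ and $x_i\triangleright x_j\neq x_j$ for all $i\neq j$, then $X\times Y$ is of type F. (iii) Let $X^{(2)}=X_1\sqcup X_2$, where $\varphi_i:X\to X_i$ are bijections onto disjoint sets, with rack structure $\varphi_i(x)\triangleright\varphi_j(y)=\varphi_j(x\triangleright y)$ for $i,j\in\{1,2\}$. If there are $x_1\neq x_2\in X$ with $x_1\triangleright(x_2\triangleright(x_1\triangleright x_2))\neq x_2$, then $X^{(2)}$ is of type D.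
   Context: Rack: nonempty set with operation $\triangleright$, each left translation bijective, self-distributive. The product rack has $(x,y)\triangleright(x',y')=(x\triangleright x',y\triangleright y')$. A subrack $Z$ is decomposable if $Z=R\sqcup S$ with nonempty subracks $R,S$, $Z\triangleright R=R$, $Z\triangleright S=S$. Type D: there is a decomposable subrack $R\sqcup S$ and $r\in R$, $s\in S$ with $r\triangleright(s\triangleright(r\triangleright s))\neq s$. Type F: there are pairwise disjoint subracks $R_1,\dots,R_4$, $r_a\in R_a$, with $R_a\triangleright R_b=R_b$ and $r_a\triangleright r_b\neq r_b$ for all $a\neq b$. *)

(* Defs.v *)
Section Racks.
Context {T : Type} (op : T -> T -> T).

Definition is_rack : Prop :=
  inhabited T /\
  (forall x, exists g : T -> T,
      (forall y, g (op x y) = y) /\ (forall y, op x (g y) = y)) /\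
  (forall x y z, op x (op y z) = op (op x y) (op x z)).

Definition subrack (R : T -> Prop) : Prop :=
  (exists r, R r) /\
  (forall x y, R x -> R y -> R (op x y)) /\
  (forall x y, R x -> R y -> exists z, R z /\ op x z = y).

(* A |> B = B  as sets:  { a |> b | a in A, b in B } = B. *)
Definition acts_onto (A B : T -> Prop) : Prop :=
  forall t, B t <-> exists a b, A a /\ B b /\ op a b = t.

Definition decomposition (Z R S : T -> Prop) : Prop :=
  subrack Z /\ subrack R /\ subrack S /\
  (forall t, Z t <-> (R t \/ S t)) /\
  (forall t, ~ (R t /\ S t)) /\
  acts_onto Z R /\ acts_onto Z S.

Definition typeD : Prop :=
  exists R S : T -> Prop,
    decomposition (fun t => R t \/ S t) R S /\
    exists r s, R r /\ S s /\ op r (op s (op r s)) <> s.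

Definition typeF : Prop :=
  exists (R : nat -> T -> Prop) (r : nat -> T),
    (forall a, a < 4 -> subrack (R a) /\ R a (r a)) /\
    (forall a b, a < 4 -> b < 4 -> a <> b ->
       (forall t, ~ (R a t /\ R b t)) /\
       acts_onto (R a) (R b) /\
       op (r a) (r b) <> r b).

End Racks.

Definition prod_op {X Y : Type} (opX : X -> X -> X) (opY : Y -> Y -> Y)
  (p q : X * Y) : X * Y :=
  (opX (fst p) (fst q), opY (snd p) (snd q)).

(* X^(2) = X_1 ⊔ X_2 modelled as X + X with phi_1 = inl, phi_2 = inr:
   phi_i(x) |> phi_j(y) = phi_j(x |> y). *)
Definition double_op {X : Type} (opX : X -> X -> X) (p q : X + X) : X + X :=
  let x := match p with inl a => a | inr a => a end in
  match q with
  | inl y => inl (opX x y)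
  | inr y => inr (opX x y)
  end.

(* Main.v *)
Require Import Defs.
From Stdlib Require Import Arith Lia.

Section RackFacts.
Variables (Y : Type) (op : Y -> Y -> Y) (hY : is_rack op).

Lemma r_inj : forall x a b, op x a = op x b -> a = b.
Proof.
  intros x a b H. destruct hY as [_ [hi _]]. destruct (hi x) as [g [g1 _]].
  rewrite <- (g1 a), <- (g1 b), H. reflexivity.
Qed.

Lemma r_surj : forall x b, exists a, op x a = b.
Proof.
  intros x b. destruct hY as [_ [hi _]]. destruct (hi x) as [g [_ g2]].
  exists (g b). apply g2.
Qed.

Lemma r_sd : forall x y z, op x (op y z) = op (op x y) (op x z).
Proof. destruct hY as [_ [_ h]]. exact h. Qed.

Lemma r_comm2 : forall a b u, op a b = b -> op a (op b u) = op b (op a u).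
Proof. intros a b u H. rewrite r_sd, H. reflexivity. Qed.

Variable gen : Y -> Prop.
Hypothesis comm : forall g h u, gen g -> gen h -> op g (op h u) = op h (op g u).

Inductive orb (c : Y) : Y -> Prop :=
| orb_base : orb c c
| orb_step : forall g w, gen g -> orb c w -> orb c (op g w)
| orb_back : forall g w, gen g -> orb c (op g w) -> orb c w.

Lemma orb_phi : forall c w, gen c -> orb c w -> forall z, op w z = op c z.
Proof.
  intros c w Hc Ho. induction Ho as [|g w Hg Ho IH|g w Hg Ho IH]; intro z.
  - reflexivity.
  - destruct (r_surj g z) as [a Ha]. subst z.
    rewrite <- r_sd, IH. apply comm; assumption.
  - apply (r_inj g). rewrite r_sd, IH. symmetry. apply comm; assumption.
Qed.

Lemma orb_fix : forall d, (forall g, gen g -> op g d = d) ->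
  forall c w, orb c w -> (w = d <-> c = d).
Proof.
  intros d Hd c w Ho. induction Ho as [|g w Hg Ho IH|g w Hg Ho IH].
  - tauto.
  - rewrite <- IH. split; intro H.
    + apply (r_inj g). rewrite Hd; assumption.
    + subst. apply Hd; assumption.
  - rewrite <- IH. split; intro H.
    + subst. apply Hd; assumption.
    + apply (r_inj g). rewrite Hd; assumption.
Qed.

Lemma orb_subrack : forall c, gen c -> subrack op (orb c).
Proof.
  intros c Hc. split; [exists c; constructor|split].
  - intros a b Ha Hb. rewrite (orb_phi c a Hc Ha). apply orb_step; assumption.
  - intros a b Ha Hb. destruct (r_surj c b) as [z Hz]. exists z. split.
    + apply (orb_back c c z Hc). rewrite Hz. assumption.
    + rewrite (orb_phi c a Hc Ha). assumption.
Qed.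

Lemma orb_acts : forall (P : Y -> Prop) c',
  (forall a, P a -> exists c, gen c /\ orb c a) -> (exists a, P a) ->
  acts_onto op P (orb c').
Proof.
  intros P c' HP [a0 Ha0] t. split.
  - intro Ht. destruct (HP a0 Ha0) as [c0 [Hc0 Ho0]].
    destruct (r_surj c0 t) as [z Hz]. exists a0, z. split; [assumption|split].
    + apply (orb_back c' c0 z Hc0). rewrite Hz. assumption.
    + rewrite (orb_phi c0 a0 Hc0 Ho0). assumption.
  - intros [a [b [Ha [Hb Hab]]]]. subst t. destruct (HP a Ha) as [c [Hc Ho]].
    rewrite (orb_phi c a Hc Ho). apply orb_step; assumption.
Qed.

Lemma union_subrack : forall c1 c2, gen c1 -> gen c2 ->
  subrack op (fun t => orb c1 t \/ orb c2 t).
Proof.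
  intros c1 c2 H1 H2. split; [exists c1; left; constructor|split].
  - intros a b Ha Hb.
    assert (E : op a b = op c1 b \/ op a b = op c2 b).
    { destruct Ha as [Ha|Ha]; [left; apply (orb_phi c1)|right; apply (orb_phi c2)]; assumption. }
    destruct Hb as [Hb|Hb]; [left|right]; destruct E as [E|E]; rewrite E;
      apply orb_step; assumption.
  - intros a b Ha Hb.
    assert (Ex : exists c, gen c /\ forall z, op a z = op c z).
    { destruct Ha as [Ha|Ha]; [exists c1|exists c2]; split; try assumption;
        apply orb_phi; assumption. }
    destruct Ex as [c [Hc Ec]]. destruct (r_surj c b) as [z Hz].
    exists z. rewrite Ec. split; [|exact Hz].
    destruct Hb as [Hb|Hb]; [left|right]; rewrite <- Hz in Hb;
      exact (orb_back _ c z Hc Hb).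
Qed.

End RackFacts.

Section Lift.
Variables (X Y : Type) (opX : X -> X -> X) (opY : Y -> Y -> Y) (hX : is_rack opX).

Lemma lift_subrack : forall A : Y -> Prop, subrack opY A ->
  subrack (prod_op opX opY) (fun p => A (snd p)).
Proof.
  intros A [[a Ha] [Hc Hd]]. destruct hX as [[x0] _].
  split; [exists (x0, a); exact Ha|split].
  - intros p q Hp Hq. simpl. apply Hc; assumption.
  - intros p q Hp Hq. destruct (Hd _ _ Hp Hq) as [zy [Hzy E]].
    destruct (r_surj X opX hX (fst p) (fst q)) as [zx Hzx].
    exists (zx, zy). split; [exact Hzy|]. unfold prod_op; simpl.
    rewrite Hzx, E. destruct q; reflexivity.
Qed.

Lemma lift_acts : forall A B : Y -> Prop, acts_onto opY A B ->
  acts_onto (prod_op opX opY) (fun p => A (snd p)) (fun p => B (snd p)).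
Proof.
  intros A B H t. destruct hX as [[x0] _]. split.
  - intro Ht. destruct (proj1 (H (snd t)) Ht) as [a [b [Ha [Hb E]]]].
    destruct (r_surj X opX hX x0 (fst t)) as [zx Hzx].
    exists (x0, a), (zx, b). split; [exact Ha|split; [exact Hb|]].
    unfold prod_op; simpl. rewrite Hzx, E. destruct t; reflexivity.
  - intros [a [b [Ha [Hb E]]]]. subst t. simpl. apply (proj2 (H _)).
    exists (snd a), (snd b). auto.
Qed.

End Lift.

Theorem mainTheorem4 (X Y : Type) (opX : X -> X -> X) (opY : Y -> Y -> Y)
  (hX : is_rack opX) (hY : is_rack opY) :
  (* (i) *)
  ((exists (y1 y2 : Y) (x1 x2 : X),
      y1 <> y2 /\ x1 <> x2 /\ opY y1 y2 = y2 /\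
      opX x1 (opX x2 (opX x1 x2)) <> x2) ->
   typeD (prod_op opX opY)) /\
  (* (ii) *)
  ((exists (y : nat -> Y) (x : nat -> X),
      forall i j, i < 4 -> j < 4 -> i <> j ->
        y i <> y j /\ x i <> x j /\
        opY (y i) (y j) = y j /\ opX (x i) (x j) <> x j) ->
   typeF (prod_op opX opY)) /\
  (* (iii) *)
  ((exists x1 x2 : X, x1 <> x2 /\ opX x1 (opX x2 (opX x1 x2)) <> x2) ->
   typeD (double_op opX)).
Proof.
  split; [|split].
  - intros [y1 [y2 [x1 [x2 [Hy [_ [H12 Hx]]]]]]].
    set (gen := fun c => c = y1 \/ c = y2).
    assert (comm : forall g h u, gen g -> gen h -> opY g (opY h u) = opY h (opY g u)).
    { intros g h u [Hg|Hg] [Hh|Hh]; subst; try reflexivity.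
      - apply (r_comm2 Y opY hY); assumption.
      - symmetry. apply (r_comm2 Y opY hY); assumption. }
    assert (G1 : gen y1) by (left; reflexivity).
    assert (G2 : gen y2) by (right; reflexivity).
    assert (Dis : forall t, ~ (orb Y opY gen y1 t /\ orb Y opY gen y2 t)).
    { intros t [T1 T2].
      assert (Fx : forall g, gen g -> opY g y2 = y2).
      { intros g [Hg|Hg]; subst g; [assumption|].
        rewrite <- (orb_phi Y opY hY gen comm y2 t G2 T2).
        rewrite (orb_phi Y opY hY gen comm y1 t G1 T1). assumption. }
      pose proof (proj2 (orb_fix Y opY hY gen y2 Fx y2 t T2) eq_refl) as Et.
      apply Hy. apply (orb_fix Y opY hY gen y2 Fx y1 t T1). exact Et. }
    assert (Pu : forall a, (orb Y opY gen y1 a \/ orb Y opY gen y2 a) ->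
                 exists c, gen c /\ orb Y opY gen c a).
    { intros a [Ha|Ha]; eexists; split; [|exact Ha| |exact Ha]; assumption. }
    assert (Pe : exists a, orb Y opY gen y1 a \/ orb Y opY gen y2 a)
      by (exists y1; left; constructor).
    exists (fun p => orb Y opY gen y1 (snd p)), (fun p => orb Y opY gen y2 (snd p)).
    split.
    + split; [|split; [|split; [|split; [|split; [|split]]]]].
      * exact (lift_subrack X Y opX opY hX _ (union_subrack Y opY hY gen comm y1 y2 G1 G2)).
      * exact (lift_subrack X Y opX opY hX _ (orb_subrack Y opY hY gen comm y1 G1)).
      * exact (lift_subrack X Y opX opY hX _ (orb_subrack Y opY hY gen comm y2 G2)).
      * intro t; tauto.
      * intro t; apply Dis.
      * exact (lift_acts X Y opX opY hX _ _ (orb_acts Y opY hY gen comm _ y1 Pu Pe)).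
      * exact (lift_acts X Y opX opY hX _ _ (orb_acts Y opY hY gen comm _ y2 Pu Pe)).
    + exists (x1, y1), (x2, y2). split; [constructor|split; [constructor|]].
      intro E. apply (f_equal fst) in E. simpl in E. exact (Hx E).
  - intros [y [x H]].
    set (gen := fun c => exists i, i < 4 /\ c = y i).
    assert (comm : forall g h u, gen g -> gen h -> opY g (opY h u) = opY h (opY g u)).
    { intros g h u [i [Hi Eg]] [j [Hj Eh]]; subst.
      destruct (Nat.eq_dec i j) as [->|Nij]; [reflexivity|].
      apply (r_comm2 Y opY hY). apply (H i j Hi Hj Nij). }
    assert (Gn : forall a, a < 4 -> gen (y a)) by (intros a Ha; exists a; auto).
    exists (fun a p => orb Y opY gen (y a) (snd p)), (fun a => (x a, y a)).
    split.
    + intros a Ha. split; [|constructor].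
      exact (lift_subrack X Y opX opY hX _ (orb_subrack Y opY hY gen comm _ (Gn a Ha))).
    + intros a b Ha Hb Nab. split; [|split].
      * intros t [T1 T2]. simpl in T1, T2.
        assert (Fx : forall g, gen g -> opY g (y b) = y b).
        { intros g [i [Hi ->]]. destruct (Nat.eq_dec i b) as [->|Nib].
          - rewrite <- (orb_phi Y opY hY gen comm (y b) _ (Gn b Hb) T2).
            rewrite (orb_phi Y opY hY gen comm (y a) _ (Gn a Ha) T1).
            apply (H a b Ha Hb Nab).
          - apply (H i b Hi Hb Nib). }
        pose proof (proj2 (orb_fix Y opY hY gen (y b) Fx (y b) _ T2) eq_refl) as Et.
        apply (proj1 (H a b Ha Hb Nab)).
        apply (orb_fix Y opY hY gen (y b) Fx (y a) _ T1). exact Et.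
      * apply (lift_acts X Y opX opY hX _ _). apply orb_acts; [exact hY|exact comm| |].
        -- intros a' Ha'. exists (y a). split; [apply Gn; exact Ha|exact Ha'].
        -- exists (y a). constructor.
      * intro E. apply (f_equal fst) in E. simpl in E.
        exact (proj2 (proj2 (proj2 (H a b Ha Hb Nab))) E).
  - intros [x1 [x2 [_ Hx]]]. destruct (proj1 hX) as [x0].
    set (R := fun p : X + X => match p with inl _ => True | inr _ => False end).
    set (S := fun p : X + X => match p with inl _ => False | inr _ => True end).
    assert (Zall : forall t, R t \/ S t) by (intros [t|t]; simpl; auto).
    assert (Hs : forall (P : X + X -> Prop) (f : X -> X + X),
      (forall t, P t <-> exists a, t = f a) ->
      (forall p a, double_op opX p (f a) = f (opX (match p with inl u => u | inr u => u end) a)) ->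
      subrack (double_op opX) P /\ acts_onto (double_op opX) (fun t => R t \/ S t) P).
    { intros P f HP Hf. split; [split; [|split]|].
      - exists (f x0). apply HP. eauto.
      - intros p q Hp Hq. apply HP in Hq. destruct Hq as [b ->]. rewrite Hf. apply HP. eauto.
      - intros p q Hp Hq. apply HP in Hq. destruct Hq as [b ->].
        destruct (r_surj X opX hX (match p with inl u => u | inr u => u end) b) as [z Hz].
        exists (f z). split; [apply HP; eauto|]. rewrite Hf, Hz. reflexivity.
      - intro t. split.
        + intro Ht. apply HP in Ht. destruct Ht as [b ->].
          destruct (r_surj X opX hX x0 b) as [z Hz].
          exists (inl x0), (f z). split; [apply Zall|split; [apply HP; eauto|]].
          rewrite Hf, Hz. reflexivity.
        + intros [a [b [_ [Hb E]]]]. apply HP in Hb. destruct Hb as [bb ->].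
          subst t. rewrite Hf. apply HP. eauto. }
    destruct (Hs R inl) as [SR AR].
    { intros [t|t]; simpl; split; intro h; eauto; try contradiction;
        destruct h as [a h]; discriminate. }
    { intros [p|p] a; reflexivity. }
    destruct (Hs S inr) as [SS AS].
    { intros [t|t]; simpl; split; intro h; eauto; try contradiction;
        destruct h as [a h]; discriminate. }
    { intros [p|p] a; reflexivity. }
    exists R, S. split.
    + split; [|split; [exact SR|split; [exact SS|split; [|split; [|split; assumption]]]]].
      * split; [exists (inl x0); left; exact I|split].
        -- intros; apply Zall.
        -- intros p q _ _. destruct q as [b|b];
           destruct (r_surj X opX hX (match p with inl u => u | inr u => u end) b) as [z Hz];
           [exists (inl z)|exists (inr z)]; split; try apply Zall;
           destruct p; simpl in *; rewrite Hz; reflexivity.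
      * intro t; tauto.
      * intros [t|t]; simpl; tauto.
    + exists (inl x1), (inr x2). split; [exact I|split; [exact I|]].
      simpl. intro E. injection E. exact Hx.
Qed.
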